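(* Let $\mathbf t=(t_1,t_2,t_3)\in\mathbb N^3$, $k=t_1+t_2+t_3+2$, and let $w\ge k$ be a constant integer. For each $n>w$ let $\mathbf J=(J_1,J_2,J_3)$ be a random vector with \[ \mathbb P(\mathbf J=\mathbf j)=\binom{j_1}{t_1}\binom{j_2}{t_2}\binom{j_3}{t_3}\Big/\binom nk\qquad\text{for }\mathbf j\in\mathbb N^3,\ j_1+j_2+j_3=n-2 . \] Let $(E_n)_{n\ge0}$ and $(T_n)_{n\ge0}$ be sequences of real numbers such that $E_n$, for $n\le w$, are given constants and \[ E_n=T_n+\sum_{j=0}^{n-2}E_j\sum_{r=1}^3\mathbb P(J_r=j)\qquad\text{for }n>w, \] and suppose $T_n=an+O(n^{1-\varepsilon})$ for constants $a$ and $\varepsilon>0$. Then \[ E_n\sim\frac{a}{\mathcal H}\,n\ln n\qquad(n\to\infty), \] where $\mathcal H=\sum_{r=1}^3\frac{t_r+1}{k+1}(H_{k+1}-H_{t_r+1})$ and $H_m=\sum_{i=1}^m 1/i$.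
   Context: In the paper, $E_n$ is the expected cost $\mathbb E[C_n]$ of Generalized Yaroslavskiy Quicksort, $T_n$ the expected partitioning cost $\mathbb E[T_n]$, and the base values for $n\le w$ are expected Insertionsort costs; here these are stated abstractly as numbers. *)

(* Defs.v *)
From Stdlib Require Import Reals Lra Lia.
From Coquelicot Require Import Coquelicot.
Open Scope R_scope.

Fixpoint binom (n k : nat) : nat :=
  match n, k with
  | _, O => 1%nat
  | O, S _ => 0%nat
  | S n', S k' => (binom n' k' + binom n' k)%nat
  end.

Fixpoint sumR (f : nat -> R) (m : nat) : R :=
  match m with
  | O => 0
  | S m' => sumR f m' + f m'
  end.

Definition harm (m : nat) : R := sumR (fun i => / INR (S i)) m.

Definition probJ (t1 t2 t3 n j1 j2 j3 : nat) : R :=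
  if Nat.eqb (j1 + j2 + j3) (n - 2) then
    INR (binom j1 t1 * binom j2 t2 * binom j3 t3)
      / INR (binom n (t1 + t2 + t3 + 2))
  else 0.

Definition comp (r j1 j2 j3 : nat) : nat :=
  match r with 1%nat => j1 | 2%nat => j2 | _ => j3 end.

Definition probJr (t1 t2 t3 n r j : nat) : R :=
  sumR (fun j1 => sumR (fun j2 =>
    if Nat.leb (j1 + j2) (n - 2) then
      (if Nat.eqb (comp r j1 j2 (n - 2 - j1 - j2)) j then
         probJ t1 t2 t3 n j1 j2 (n - 2 - j1 - j2) else 0)
    else 0) (S (n - 2))) (S (n - 2)).

Definition Hcal (t1 t2 t3 : nat) : R :=
  let k := (t1 + t2 + t3 + 2)%nat in
  INR (t1 + 1) / INR (k + 1) * (harm (k + 1) - harm (t1 + 1))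
  + INR (t2 + 1) / INR (k + 1) * (harm (k + 1) - harm (t2 + 1))
  + INR (t3 + 1) / INR (k + 1) * (harm (k + 1) - harm (t3 + 1)).

(* Main.v *)
Require Import Defs.
From Stdlib Require Import Reals Lra Lia.
From Coquelicot Require Import Coquelicot.
Open Scope R_scope.

Lemma sumR_ext f g m : (forall i, (i < m)%nat -> f i = g i) -> sumR f m = sumR g m.
Proof. induction m; intros H; simpl; auto. rewrite IHm by (intros; apply H; lia). rewrite H by lia. auto. Qed.

Lemma sumR_plus f g m : sumR (fun i => f i + g i) m = sumR f m + sumR g m.
Proof. induction m; simpl; [lra|]. rewrite IHm; lra. Qed.

Lemma sumR_scal c f m : sumR (fun i => c * f i) m = c * sumR f m.
Proof. induction m; simpl; [lra|]. rewrite IHm; lra. Qed.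

Lemma sumR_le f g m : (forall i, (i < m)%nat -> f i <= g i) -> sumR f m <= sumR g m.
Proof. induction m; intros H; simpl; [lra|]. assert (H1 := H m ltac:(lia)).
 assert (sumR f m <= sumR g m) by (apply IHm; intros; apply H; lia). lra. Qed.

Lemma sumR_nonneg f m : (forall i, (i < m)%nat -> 0 <= f i) -> 0 <= sumR f m.
Proof. induction m; intros H; simpl; [lra|]. assert (H1 := H m ltac:(lia)).
 assert (0 <= sumR f m) by (apply IHm; intros; apply H; lia). lra. Qed.

Lemma sumR_zero f m : (forall i, (i < m)%nat -> f i = 0) -> sumR f m = 0.
Proof. intros H. rewrite (sumR_ext f (fun _ => 0)) by auto. induction m; simpl; [lra|].
 rewrite IHm; [lra|intros; apply H; lia]. Qed.

Lemma sumR_S f m : sumR f (S m) = sumR f m + f m.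
Proof. reflexivity. Qed.

Lemma sumR_shift f m : sumR f (S m) = f 0%nat + sumR (fun i => f (S i)) m.
Proof. induction m; simpl in *; [lra|]. rewrite IHm; lra. Qed.

Lemma sumR_rev f m : sumR f m = sumR (fun i => f (m - 1 - i)%nat) m.
Proof. induction m; [reflexivity|].
 rewrite (sumR_shift (fun i => f (S m - 1 - i)%nat)). change (sumR f (S m)) with (sumR f m + f m). rewrite IHm.
 replace (S m - 1 - 0)%nat with m by lia.
 rewrite (sumR_ext (fun i => f (m - 1 - i)%nat) (fun i => f (S m - 1 - S i)%nat)) by (intros; f_equal; lia).
 lra. Qed.

Lemma sumR_swap (X : nat -> nat -> R) p q :
  sumR (fun i => sumR (fun j => X i j) q) p = sumR (fun j => sumR (fun i => X i j) p) q.
Proof. induction p; simpl.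
 - symmetry; apply sumR_zero; auto.
 - rewrite IHp. rewrite <- sumR_plus. reflexivity. Qed.

Lemma sumR_trunc g p q : (p < q)%nat ->
  sumR (fun j => if Nat.leb j p then g j else 0) q = sumR g (S p).
Proof. intros H. replace q with (S p + (q - S p))%nat by lia. generalize (q - S p)%nat as d.
 induction d.
 - rewrite Nat.add_0_r. apply sumR_ext. intros i Hi. replace (Nat.leb i p) with true; auto.
   symmetry; apply Nat.leb_le; lia.
 - replace (S p + S d)%nat with (S (S p + d)) by lia. rewrite sumR_S, IHd.
   replace (Nat.leb (S p + d) p) with false; [lra|]. symmetry; apply Nat.leb_gt; lia. Qed.

Lemma sumR_delta f x v m : (x < m)%nat ->
  sumR (fun j => f j * (if Nat.eqb x j then v else 0)) m = f x * v.
Proof. induction m; intros H; [lia|]. simpl sumR.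
 destruct (Nat.eq_dec x m) as [->|Hne].
 - rewrite Nat.eqb_refl. rewrite sumR_zero; [lra|]. intros i Hi.
   replace (Nat.eqb m i) with false; [lra|]. symmetry; apply Nat.eqb_neq; lia.
 - rewrite IHm by lia. replace (Nat.eqb x m) with false; [lra|]. symmetry; apply Nat.eqb_neq; lia. Qed.

Lemma binom_0 n : binom n 0 = 1%nat.
Proof. destruct n; reflexivity. Qed.

Lemma binom_gt n k : (n < k)%nat -> binom n k = 0%nat.
Proof. revert k; induction n; intros k H; destruct k; try lia; auto.
 change (binom (S n) (S k)) with (binom n k + binom n (S k))%nat. rewrite !IHn by lia. reflexivity. Qed.

Lemma binom_pos n k : (k <= n)%nat -> (0 < binom n k)%nat.
Proof. revert k; induction n; intros k H; destruct k; try (rewrite binom_0; lia); try lia.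
 change (binom (S n) (S k)) with (binom n k + binom n (S k))%nat. assert (0 < binom n k)%nat by (apply IHn; lia). lia. Qed.

Lemma binom_1 n : binom n 1 = n.
Proof. induction n; auto. change (binom (S n) 1) with (binom n 0 + binom n 1)%nat. rewrite binom_0, IHn. lia. Qed.

Lemma binom_absorb j t : (S t * binom (S j) (S t) = S j * binom j t)%nat.
Proof. revert t; induction j; intros t.
 - destruct t; simpl; lia.
 - destruct t.
   + rewrite binom_1, binom_0. lia.
   + change (binom (S (S j)) (S (S t))) with (binom (S j) (S t) + binom (S j) (S (S t)))%nat.
     pose proof (IHj t) as H1. pose proof (IHj (S t)) as H2.
     change (binom (S j) (S t)) with (binom j t + binom j (S t))%nat in *.
     nia. Qed.


Definition V (N a b : nat) (F : nat -> R) : R :=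
  sumR (fun x => INR (binom x a) * INR (binom (N - x) b) * F x) (S N).

Lemma V_rec_0 N a F : V (S N) a 0 F = V N a 0 F + INR (binom (S N) a) * F (S N).
Proof. unfold V. rewrite sumR_S. rewrite Nat.sub_diag, !binom_0.
 f_equal; [|simpl; lra]. apply sumR_ext; intros; rewrite !binom_0; reflexivity. Qed.

Lemma V_rec_S N a b F : V (S N) a (S b) F = V N a b F + V N a (S b) F.
Proof. unfold V. rewrite sumR_S. rewrite Nat.sub_diag.
 change (binom 0 (S b)) with 0%nat. rewrite <- sumR_plus. rewrite INR_0, Rmult_0_r, Rmult_0_l, Rplus_0_r.
 apply sumR_ext; intros x Hx. replace (S N - x)%nat with (S (N - x)) by lia.
 change (binom (S (N - x)) (S b)) with (binom (N - x) b + binom (N - x) (S b))%nat.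
 rewrite plus_INR. ring. Qed.

Lemma harm_S m : harm (S m) = harm m + / INR (S m).
Proof. reflexivity. Qed.

Lemma absorbR j t : INR (binom (S j) (S t)) = INR (S j) * INR (binom j t) / INR (S t).
Proof. pose proof (binom_absorb j t) as H. apply (f_equal INR) in H. rewrite !mult_INR in H.
 assert (INR (S t) <> 0) by (apply not_0_INR; lia). field_simplify_eq; auto. lra. Qed.

Lemma V1 N a b : V N a b (fun _ => 1) = INR (binom (S N) (a + b + 1)).
Proof. revert b; induction N; intros b.
 - unfold V. simpl sumR. replace (a + b + 1)%nat with (S (a + b)) by lia.
   destruct a, b; simpl; lra.
 - destruct b.
   + rewrite V_rec_0, IHN. replace (a + 0 + 1)%nat with (S a) by lia.
     change (binom (S (S N)) (S a)) with (binom (S N) a + binom (S N) (S a))%nat.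
     rewrite plus_INR. lra.
   + rewrite V_rec_S, !IHN. replace (a + S b + 1)%nat with (S (a + b + 1)) by lia.
     change (binom (S (S N)) (S (a + b + 1))) with (binom (S N) (a + b + 1) + binom (S N) (S (a+b+1)))%nat.
     rewrite plus_INR. lra. Qed.

Lemma V2 N a b : V N a b harm = INR (binom (S N) (a + b + 1)) * (harm (S N) - harm (a + b + 1) + harm a).
Proof. revert b; induction N; intros b.
 - unfold V. simpl sumR. replace (a + b + 1)%nat with (S (a + b)) by lia.
   destruct a, b; unfold harm; simpl; lra.
 - destruct b.
   + rewrite V_rec_0, IHN. replace (a + 0 + 1)%nat with (S a) by lia.
     assert (E1 : INR (binom (S (S N)) (S a)) = INR (binom (S N) a) + INR (binom (S N) (S a)))
       by (rewrite <- plus_INR; reflexivity).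
     pose proof (absorbR (S N) a) as E2.
     rewrite E1 in E2. rewrite E1. rewrite (harm_S (S N)), (harm_S a).
     assert (INR (S a) <> 0) by (apply not_0_INR; lia).
     assert (INR (S (S N)) <> 0) by (apply not_0_INR; lia).
     assert (E3 : INR (binom (S N) (S a)) = INR (S (S N)) * INR (binom (S N) a) / INR (S a) - INR (binom (S N) a)) by lra.
     rewrite E3. field. auto.
   + rewrite V_rec_S, !IHN. replace (a + S b + 1)%nat with (S (a + b + 1)) by lia.
     set (c := (a + b + 1)%nat).
     assert (E1 : INR (binom (S (S N)) (S c)) = INR (binom (S N) c) + INR (binom (S N) (S c)))
       by (rewrite <- plus_INR; reflexivity).
     pose proof (absorbR (S N) c) as E2.
     rewrite E1 in E2. rewrite E1. rewrite (harm_S (S N)), (harm_S c).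
     assert (INR (S c) <> 0) by (apply not_0_INR; lia).
     assert (INR (S (S N)) <> 0) by (apply not_0_INR; lia).
     assert (E3 : INR (binom (S N) (S c)) = INR (S (S N)) * INR (binom (S N) c) / INR (S c) - INR (binom (S N) c)) by lra.
     rewrite E3. field. auto. Qed.


Definition TS (m : nat) (Phi : nat -> nat -> nat -> R) : R :=
  sumR (fun x => sumR (fun y => if Nat.leb (x + y) m then Phi x y (m - x - y)%nat else 0) (S m)) (S m).

Definition conv (B C : nat -> R) (p : nat) : R := sumR (fun y => B y * C (p - y)%nat) (S p).

Lemma TS_ext m Phi Psi : (forall x y z, Phi x y z = Psi x y z) -> TS m Phi = TS m Psi.
Proof. intros H; unfold TS. apply sumR_ext; intros; apply sumR_ext; intros.
 destruct (Nat.leb _ _); auto. Qed.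

Lemma TS_scal m c Phi : TS m (fun x y z => c * Phi x y z) = c * TS m Phi.
Proof. unfold TS. rewrite <- sumR_scal. apply sumR_ext; intros. rewrite <- sumR_scal.
 apply sumR_ext; intros. destruct (Nat.leb _ _); ring. Qed.

Lemma inner_trunc m x (g : nat -> nat -> R) : (x <= m)%nat ->
  sumR (fun y => if Nat.leb (x + y) m then g y (m - x - y)%nat else 0) (S m)
  = sumR (fun y => g y (m - x - y)%nat) (S (m - x)).
Proof. intros Hx. rewrite <- (sumR_trunc (fun y => g y (m - x - y)%nat) (m - x) (S m)) by lia.
 apply sumR_ext; intros y Hy.
 destruct (Nat.leb (x + y) m) eqn:E1; destruct (Nat.leb y (m - x)) eqn:E2; auto.
 - apply Nat.leb_le in E1; apply Nat.leb_gt in E2; lia.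
 - apply Nat.leb_gt in E1; apply Nat.leb_le in E2; lia. Qed.

Lemma TS_conv m A B C :
  TS m (fun x y z => A x * B y * C z) = sumR (fun x => A x * conv B C (m - x)) (S m).
Proof. unfold TS. apply sumR_ext; intros x Hx.
 pose proof (inner_trunc m x (fun y z => A x * B y * C z) ltac:(lia)) as H; cbv beta in H; rewrite H.
 unfold conv. rewrite <- sumR_scal. apply sumR_ext; intros. replace (m - x - i)%nat with (m - x - i)%nat by lia. ring. Qed.

Lemma TS_swap_xy m Phi : TS m Phi = TS m (fun x y z => Phi y x z).
Proof. unfold TS. rewrite sumR_swap. apply sumR_ext; intros x Hx; apply sumR_ext; intros y Hy.
 rewrite (Nat.add_comm y x). replace (m - y - x)%nat with (m - x - y)%nat by lia. reflexivity. Qed.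

Lemma TS_swap_yz m Phi : TS m Phi = TS m (fun x y z => Phi x z y).
Proof. unfold TS. apply sumR_ext; intros x Hx.
 pose proof (inner_trunc m x (fun y z => Phi x y z) ltac:(lia)) as H; cbv beta in H; rewrite H.
 pose proof (inner_trunc m x (fun y z => Phi x z y) ltac:(lia)) as H'; cbv beta in H'; rewrite H'.
 rewrite sumR_rev. apply sumR_ext; intros i Hi. f_equal; lia. Qed.


Lemma marg_gen m (f : nat -> R) (c : nat -> nat -> nat) (P : nat -> nat -> R) :
 (forall j1 j2, (j1 + j2 <= m)%nat -> (c j1 j2 <= m)%nat) ->
 sumR (fun j => f j * sumR (fun j1 => sumR (fun j2 => if Nat.leb (j1+j2) m then
     (if Nat.eqb (c j1 j2) j then P j1 j2 else 0) else 0) (S m)) (S m)) (S m)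
 = sumR (fun j1 => sumR (fun j2 => if Nat.leb (j1+j2) m then f (c j1 j2) * P j1 j2 else 0) (S m)) (S m).
Proof. intros Hc.
 rewrite (sumR_ext _ (fun j => sumR (fun j1 => sumR (fun j2 => f j * (if Nat.leb (j1+j2) m then
     (if Nat.eqb (c j1 j2) j then P j1 j2 else 0) else 0)) (S m)) (S m)))
   by (intros; rewrite <- sumR_scal; apply sumR_ext; intros; rewrite <- sumR_scal; reflexivity).
 rewrite sumR_swap. apply sumR_ext; intros j1 _. rewrite sumR_swap. apply sumR_ext; intros j2 _.
 destruct (Nat.leb (j1 + j2) m) eqn:E.
 - apply sumR_delta. apply Nat.leb_le in E. specialize (Hc _ _ E). lia.
 - apply sumR_zero; intros; ring. Qed.

Section S.
Variables t1 t2 t3 m : nat.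
Let D := INR (binom (S (S m)) (t1 + t2 + t3 + 2)).
Let b (t u : nat) := INR (binom u t).

Lemma probJ_val j1 j2 : (j1 + j2 <= m)%nat ->
  probJ t1 t2 t3 (S (S m)) j1 j2 (m - j1 - j2) = / D * (b t1 j1 * b t2 j2 * b t3 (m - j1 - j2)%nat).
Proof. intros H. unfold probJ. replace (S (S m) - 2)%nat with m by lia.
 rewrite (proj2 (Nat.eqb_eq _ _)) by lia. rewrite !mult_INR. unfold D, b, Rdiv; ring. Qed.

Lemma comp_r f r :
  sumR (fun j => f j * probJr t1 t2 t3 (S (S m)) r j) (S m)
  = / D * TS m (fun x y z => f (Defs.comp r x y z) * (b t1 x * b t2 y * b t3 z)).
Proof. unfold probJr. replace (S (S m) - 2)%nat with m by lia.
 etransitivity; [apply (marg_gen m f (fun j1 j2 => Defs.comp r j1 j2 (m - j1 - j2))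
    (fun j1 j2 => probJ t1 t2 t3 (S (S m)) j1 j2 (m - j1 - j2)))|].
 - intros; destruct r as [|[|[|]]]; simpl; lia.
 - unfold TS. rewrite <- sumR_scal. apply sumR_ext; intros. rewrite <- sumR_scal. apply sumR_ext; intros.
   destruct (Nat.leb _ _) eqn:E; [|ring]. apply Nat.leb_le in E. rewrite probJ_val by lia. ring. Qed.

Lemma conv_binom p ta tb : conv (b ta) (b tb) p = INR (binom (S p) (ta + tb + 1)).
Proof. rewrite <- V1. unfold conv, V, b. apply sumR_ext; intros; ring. Qed.

Definition single (t s : nat) (f : nat -> R) :=
  sumR (fun x => f x * INR (binom x t) * INR (binom (S (m - x)) s)) (S m).

Lemma TS1 f : TS m (fun x y z => f (Defs.comp 1 x y z) * (b t1 x * b t2 y * b t3 z)) = single t1 (t2 + t3 + 1) f.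
Proof. rewrite (TS_ext m _ (fun x y z => (f x * b t1 x) * b t2 y * b t3 z)) by (intros; simpl; ring).
 rewrite TS_conv. unfold single. apply sumR_ext; intros. rewrite conv_binom. unfold b; ring. Qed.

Lemma TS2 f : TS m (fun x y z => f (Defs.comp 2 x y z) * (b t1 x * b t2 y * b t3 z)) = single t2 (t1 + t3 + 1) f.
Proof. rewrite TS_swap_xy.
 rewrite (TS_ext m _ (fun x y z => (f x * b t2 x) * b t1 y * b t3 z)) by (intros; simpl; ring).
 rewrite TS_conv. unfold single. apply sumR_ext; intros. rewrite conv_binom. unfold b; ring. Qed.

Lemma TS3 f : TS m (fun x y z => f (Defs.comp 3 x y z) * (b t1 x * b t2 y * b t3 z)) = single t3 (t1 + t2 + 1) f.
Proof. rewrite TS_swap_yz. rewrite TS_swap_xy.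
 rewrite (TS_ext m _ (fun x y z => (f x * b t3 x) * b t1 y * b t2 z)) by (intros; simpl; ring).
 rewrite TS_conv. unfold single. apply sumR_ext; intros. rewrite conv_binom. unfold b; ring. Qed.

Lemma single_eval t s f F : (1 <= s)%nat -> (forall j, f j = INR (S j) * F (S j)) ->
  single t s f = INR (S t) * V (S (S m)) (S t) s F.
Proof. intros Hs Hf. unfold V. rewrite sumR_S, sumR_shift. rewrite Nat.sub_diag.
 destruct s as [|s]; [lia|]. change (binom 0 (S s)) with 0%nat. change (binom 0 (S t)) with 0%nat.
 rewrite INR_0. rewrite !Rmult_0_l, !Rmult_0_r, Rmult_0_l, Rplus_0_l, Rplus_0_r.
 unfold single. rewrite <- sumR_scal. apply sumR_ext; intros j Hj.
 rewrite Hf, (absorbR j t). replace (S (S m) - S j)%nat with (S (m - j)) by lia.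
 assert (INR (S t) <> 0) by (apply not_0_INR; lia). field. auto. Qed.

End S.


Definition wsum t1 t2 t3 n j :=
  probJr t1 t2 t3 n 1 j + probJr t1 t2 t3 n 2 j + probJr t1 t2 t3 n 3 j.

Lemma sum_w t1 t2 t3 m f :
  sumR (fun j => f j * wsum t1 t2 t3 (S (S m)) j) (S (S m) - 1)
  = / INR (binom (S (S m)) (t1 + t2 + t3 + 2)) *
    (single m t1 (t2 + t3 + 1) f + single m t2 (t1 + t3 + 1) f + single m t3 (t1 + t2 + 1) f).
Proof. replace (S (S m) - 1)%nat with (S m) by lia. unfold wsum.
 rewrite (sumR_ext _ (fun j => f j * probJr t1 t2 t3 (S (S m)) 1 j + f j * probJr t1 t2 t3 (S (S m)) 2 j
   + f j * probJr t1 t2 t3 (S (S m)) 3 j)) by (intros; ring).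
 rewrite !sumR_plus. rewrite !comp_r. rewrite TS1, TS2, TS3. ring. Qed.

Lemma KS t1 t2 t3 m F :
  (t1 + t2 + t3 + 2 <= S (S m))%nat ->
  sumR (fun j => (INR (S j) * F (S j)) * wsum t1 t2 t3 (S (S m)) j) (S (S m) - 1)
  = INR (S (S (S m))) / INR (S (t1 + t2 + t3 + 2)) *
    (INR (S t1) * V (S (S m)) (S t1) (t2 + t3 + 1) F
     + INR (S t2) * V (S (S m)) (S t2) (t1 + t3 + 1) F
     + INR (S t3) * V (S (S m)) (S t3) (t1 + t2 + 1) F)
    / INR (binom (S (S (S m))) (S (t1 + t2 + t3 + 2))).
Proof. intros Hk. rewrite sum_w. rewrite !(single_eval m _ _ _ F) by (lia || reflexivity).
 set (k := (t1 + t2 + t3 + 2)%nat) in *.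
 pose proof (absorbR (S (S m)) k) as A.
 assert (Hb : (0 < binom (S (S m)) k)%nat) by (apply binom_pos; lia).
 assert (INR (binom (S (S m)) k) <> 0) by (apply not_0_INR; lia).
 assert (INR (binom (S (S (S m))) (S k)) <> 0).
 { rewrite A. assert (INR (S k) <> 0) by (apply not_0_INR; lia).
   assert (INR (S (S (S m))) <> 0) by (apply not_0_INR; lia).
   unfold Rdiv. apply Rmult_integral_contrapositive_currified; [|apply Rinv_neq_0_compat; auto].
   apply Rmult_integral_contrapositive_currified; auto. }
 assert (INR (S k) <> 0) by (apply not_0_INR; lia).
 assert (INR (S (S (S m))) <> 0) by (apply not_0_INR; lia).
 rewrite A. field; repeat split; auto. Qed.

Lemma KS1 t1 t2 t3 m :
  (t1 + t2 + t3 + 2 <= S (S m))%nat ->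
  sumR (fun j => INR (S j) * wsum t1 t2 t3 (S (S m)) j) (S (S m) - 1) = INR (S (S (S m))).
Proof. intros Hk.
 assert (K := KS t1 t2 t3 m (fun _ => 1) Hk). cbv beta in K.
 rewrite (sumR_ext _ (fun j => (INR (S j) * 1) * wsum t1 t2 t3 (S (S m)) j)) by (intros; ring).
 rewrite K. rewrite !V1.
 set (k := (t1 + t2 + t3 + 2)%nat) in *.
 replace (S t1 + (t2 + t3 + 1) + 1)%nat with (S k) by (unfold k; lia).
 replace (S t2 + (t1 + t3 + 1) + 1)%nat with (S k) by (unfold k; lia).
 replace (S t3 + (t1 + t2 + 1) + 1)%nat with (S k) by (unfold k; lia).
 assert (Hb : (0 < binom (S (S (S m))) (S k))%nat) by (apply binom_pos; lia).
 assert (INR (binom (S (S (S m))) (S k)) <> 0) by (apply not_0_INR; lia).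
 assert (INR (S k) <> 0) by (apply not_0_INR; lia).
 assert (Hs : INR (S t1) + INR (S t2) + INR (S t3) = INR (S k)) by (rewrite <- !plus_INR; f_equal; unfold k; lia).
 set (B := INR (binom (S (S (S m))) (S k))) in *.
 replace (INR (S t1) * B + INR (S t2) * B + INR (S t3) * B) with (INR (S k) * B) by (rewrite <- Hs; ring).
 field; auto. Qed.

Lemma KS2 t1 t2 t3 m :
  (t1 + t2 + t3 + 2 <= S (S m))%nat ->
  sumR (fun j => (INR (S j) * harm (S j)) * wsum t1 t2 t3 (S (S m)) j) (S (S m) - 1)
  = INR (S (S (S m))) * harm (S (S (S m))) - INR (S (S (S m))) * Hcal t1 t2 t3.
Proof. intros Hk.
 rewrite KS by auto. rewrite !V2. unfold Hcal. cbv zeta.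
 set (k := (t1 + t2 + t3 + 2)%nat) in *.
 replace (S t1 + (t2 + t3 + 1) + 1)%nat with (S k) by (unfold k; lia).
 replace (S t2 + (t1 + t3 + 1) + 1)%nat with (S k) by (unfold k; lia).
 replace (S t3 + (t1 + t2 + 1) + 1)%nat with (S k) by (unfold k; lia).
 replace (k + 1)%nat with (S k) by lia.
 replace (t1 + 1)%nat with (S t1) by lia. replace (t2 + 1)%nat with (S t2) by lia.
 replace (t3 + 1)%nat with (S t3) by lia.
 assert (Hb : (0 < binom (S (S (S m))) (S k))%nat) by (apply binom_pos; lia).
 assert (INR (binom (S (S (S m))) (S k)) <> 0) by (apply not_0_INR; lia).
 assert (INR (S k) <> 0) by (apply not_0_INR; lia).
 assert (Hs : INR (S t1) + INR (S t2) + INR (S t3) = INR (S k)) by (rewrite <- !plus_INR; f_equal; unfold k; lia).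
 set (B := INR (binom (S (S (S m))) (S k))) in *.
 replace (INR (S t3)) with (INR (S k) - INR (S t1) - INR (S t2)) by lra.
 field; auto. Qed.


Lemma ln1p_le x : -1 < x -> ln (1 + x) <= x.
Proof. intros H. rewrite <- (ln_exp x) at 2. apply ln_le; [lra|apply exp_ineq1_le]. Qed.

Lemma INR_S_pos n : 0 < INR (S n).
Proof. apply lt_0_INR; lia. Qed.

Lemma harm_lower n : ln (INR (S n)) <= harm n.
Proof. induction n.
 - simpl. rewrite ln_1. unfold harm; simpl; lra.
 - rewrite harm_S. pose proof (INR_S_pos n) as P.
   replace (INR (S (S n))) with (INR (S n) * (1 + / INR (S n))).
   + rewrite ln_mult by (try lra; pose proof (Rinv_0_lt_compat _ P); lra).
     pose proof (ln1p_le (/ INR (S n))) as L. pose proof (Rinv_0_lt_compat _ P). lra.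
   + rewrite (S_INR (S n)). field. lra. Qed.

Lemma harm_upper n : harm (S n) <= 1 + ln (INR (S n)).
Proof. induction n.
 - unfold harm; simpl. rewrite ln_1. lra.
 - rewrite harm_S. pose proof (INR_S_pos (S n)) as P.
   assert (Q : ln (INR (S n)) = ln (INR (S (S n))) + ln (1 + - / INR (S (S n)))).
   { assert (P0 : 0 < INR (S n)) by apply INR_S_pos.
     assert (Q1 : 1 + - / INR (S (S n)) = INR (S n) / INR (S (S n))).
     { rewrite (S_INR (S n)). field. lra. }
     rewrite Q1. rewrite <- ln_mult; [|lra|apply Rdiv_lt_0_compat; lra].
     f_equal. field. lra. }
   pose proof (ln1p_le (- / INR (S (S n)))) as L.
   assert (0 < / INR (S (S n))) by (apply Rinv_0_lt_compat; lra).
   assert (/ INR (S (S n)) < 1).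
   { assert (1 < INR (S (S n))) by (rewrite (S_INR (S n)); pose proof (INR_S_pos n); lra).
     apply (Rmult_lt_reg_l (INR (S (S n)))); [lra|]. rewrite Rinv_r by lra. lra. }
   lra. Qed.

Lemma ln2_lt_1 : ln 2 < 1.
Proof. rewrite <- ln_exp with 1. apply ln_increasing; [lra|]. pose proof (exp_ineq1 1). lra. Qed.

Lemma harm_bounds n : (1 <= n)%nat -> ln (INR n) <= harm (S n) <= ln (INR n) + 2.
Proof. intros Hn. assert (Hp : 0 < INR n) by (apply lt_0_INR; lia). split.
 - pose proof (harm_lower (S n)). assert (ln (INR n) <= ln (INR (S (S n)))).
   { apply ln_le; auto. rewrite !S_INR. lra. } lra.
 - pose proof (harm_upper n). assert (ln (INR (S n)) <= ln 2 + ln (INR n)).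
   { rewrite <- ln_mult by lra. apply ln_le; [apply INR_S_pos|]. rewrite S_INR.
     assert (1 <= INR n) by (apply (le_INR 1); lia). lra. }
   pose proof ln2_lt_1. lra. Qed.

Lemma ln_pos_n n : (2 <= n)%nat -> 0 < ln (INR n).
Proof. intros H. rewrite <- ln_1. apply ln_increasing; [lra|]. apply (lt_INR 1); lia. Qed.

Lemma lim_ln : is_lim_seq (fun n => ln (INR n)) p_infty.
Proof. apply (is_lim_comp_seq ln INR p_infty p_infty).
 - apply is_lim_ln_p.
 - exists 0%nat. intros; discriminate.
 - apply is_lim_seq_INR. Qed.

Lemma lim_inv_ln : is_lim_seq (fun n => / ln (INR n)) 0.
Proof. assert (H := is_lim_seq_inv _ _ lim_ln). simpl in H. apply H. discriminate. Qed.

Lemma lim_harm_ln : is_lim_seq (fun n => harm (S n) / ln (INR n)) 1.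
Proof.
 apply (is_lim_seq_le_le_loc (fun _ => 1) _ (fun n => 1 + 2 * / ln (INR n))).
 - exists 2%nat. intros n Hn. pose proof (ln_pos_n n Hn) as L. pose proof (harm_bounds n ltac:(lia)) as [B1 B2].
   split.
   + apply (Rmult_le_reg_r (ln (INR n))); auto. unfold Rdiv. rewrite Rmult_assoc, Rinv_l by lra. lra.
   + apply (Rmult_le_reg_r (ln (INR n))); auto. unfold Rdiv. rewrite Rmult_assoc, Rinv_l by lra.
     rewrite Rmult_plus_distr_r, Rmult_assoc, Rinv_l by lra. lra.
 - apply is_lim_seq_const.
 - replace (Finite 1) with (Finite (1 + 2 * 0)) by (f_equal; ring).
   apply is_lim_seq_plus'. apply is_lim_seq_const. exact (is_lim_seq_scal_l _ 2 0 lim_inv_ln). Qed.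

Lemma lim_inv_n : is_lim_seq (fun n => / INR n) 0.
Proof. assert (H := is_lim_seq_inv _ _ is_lim_seq_INR). simpl in H. apply H. discriminate. Qed.

Lemma lim_Sn_n : is_lim_seq (fun n => INR (S n) / INR n) 1.
Proof. apply (is_lim_seq_ext_loc (fun n => 1 + / INR n)).
 - exists 1%nat. intros n Hn. assert (0 < INR n) by (apply lt_0_INR; lia). rewrite S_INR. field. lra.
 - replace (Finite 1) with (Finite (1 + 0)) by (f_equal; ring).
   apply is_lim_seq_plus'. apply is_lim_seq_const. apply lim_inv_n. Qed.

Lemma lim_G : is_lim_seq (fun n => INR (S n) * harm (S n) / (INR n * ln (INR n))) 1.
Proof. apply (is_lim_seq_ext_loc (fun n => (INR (S n) / INR n) * (harm (S n) / ln (INR n)))).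
 - exists 2%nat. intros n Hn. pose proof (ln_pos_n n Hn). assert (0 < INR n) by (apply lt_0_INR; lia).
   field. lra.
 - replace (Finite 1) with (Finite (1 * 1)) by (f_equal; ring).
   apply is_lim_seq_mult'. apply lim_Sn_n. apply lim_harm_ln. Qed.

Lemma lim_S : is_lim_seq (fun n => INR (S n) / (INR n * ln (INR n))) 0.
Proof. apply (is_lim_seq_ext_loc (fun n => (INR (S n) / INR n) * / ln (INR n))).
 - exists 2%nat. intros n Hn. pose proof (ln_pos_n n Hn). assert (0 < INR n) by (apply lt_0_INR; lia).
   field. lra.
 - replace (Finite 0) with (Finite (1 * 0)) by (f_equal; ring).
   apply is_lim_seq_mult'. apply lim_Sn_n. apply lim_inv_ln. Qed.

Lemma small_o (T : nat -> R) a eps : 0 < eps ->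
  (exists (C : R) (N : nat), forall n : nat, (N <= n)%nat ->
     Rabs (T n - a * INR n) <= C * Rpower (INR n) (1 - eps)) ->
  forall d, 0 < d -> exists N, forall n, (N <= n)%nat -> Rabs (T n - a * INR n) <= d * INR n.
Proof. intros He [C [N HN]] d Hd.
 destruct (Rle_lt_dec C 0) as [HC|HC].
 - exists (S N). intros n Hn. eapply Rle_trans; [apply HN; lia|].
   assert (0 <= Rpower (INR n) (1 - eps)) by (unfold Rpower; left; apply exp_pos).
   assert (0 <= INR n) by apply pos_INR. nra.
 - set (L := - ln (d / C) / eps).
   assert (Hl := proj2 (is_lim_seq_spec _ _) lim_ln L). simpl in Hl. destruct Hl as [N1 HN1].
   exists (max (S N) N1). intros n Hn. eapply Rle_trans; [apply HN; lia|].
   assert (Hn0 : 0 < INR n) by (apply lt_0_INR; lia).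
   specialize (HN1 n ltac:(lia)).
   unfold Rpower. replace ((1 - eps) * ln (INR n)) with (ln (INR n) + (- eps * ln (INR n))) by ring.
   rewrite exp_plus, exp_ln by auto.
   assert (exp (- eps * ln (INR n)) < d / C).
   { rewrite <- (exp_ln (d / C)) by (apply Rdiv_lt_0_compat; auto). apply exp_increasing.
     unfold L in HN1. apply (Rmult_lt_compat_l eps) in HN1; auto.
     replace (eps * (- ln (d / C) / eps)) with (- ln (d / C)) in HN1 by (field; lra). lra. }
   assert (C * exp (- eps * ln (INR n)) <= d).
   { apply (Rmult_lt_compat_l C) in H; auto. replace (C * (d / C)) with d in H by (field; lra). lra. }
   nra. Qed.


Lemma probJ_nonneg t1 t2 t3 n j1 j2 j3 : 0 <= probJ t1 t2 t3 n j1 j2 j3.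
Proof. unfold probJ. destruct (Nat.eqb _ _); [|lra]. unfold Rdiv. apply Rmult_le_pos; [apply pos_INR|].
 destruct (Req_dec (INR (binom n (t1 + t2 + t3 + 2))) 0) as [H|H].
 - rewrite H, Rinv_0. lra.
 - left. apply Rinv_0_lt_compat. pose proof (pos_INR (binom n (t1 + t2 + t3 + 2))). lra. Qed.

Lemma probJr_nonneg t1 t2 t3 n r j : 0 <= probJr t1 t2 t3 n r j.
Proof. unfold probJr. apply sumR_nonneg; intros; apply sumR_nonneg; intros.
 destruct (Nat.leb _ _); [|lra]. destruct (Nat.eqb _ _); [apply probJ_nonneg|lra]. Qed.

Lemma wsum_nonneg t1 t2 t3 n j : 0 <= wsum t1 t2 t3 n j.
Proof. unfold wsum. pose proof (probJr_nonneg t1 t2 t3 n 1 j). pose proof (probJr_nonneg t1 t2 t3 n 2 j).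
 pose proof (probJr_nonneg t1 t2 t3 n 3 j). lra. Qed.

Lemma harm_lt p q : (p < q)%nat -> harm p < harm q.
Proof. intros H. induction H.
 - rewrite harm_S. pose proof (Rinv_0_lt_compat _ (INR_S_pos p)). lra.
 - rewrite harm_S. pose proof (Rinv_0_lt_compat _ (INR_S_pos m)). lra. Qed.

Lemma Hcal_pos t1 t2 t3 : 0 < Hcal t1 t2 t3.
Proof. unfold Hcal. cbv zeta.
 assert (forall t, (t <= t1 + t2 + t3)%nat ->
   0 < INR (t + 1) / INR (t1 + t2 + t3 + 2 + 1) * (harm (t1 + t2 + t3 + 2 + 1) - harm (t + 1))).
 { intros t Ht. apply Rmult_lt_0_compat.
   - apply Rdiv_lt_0_compat; apply lt_0_INR; lia.
   - pose proof (harm_lt (t + 1) (t1 + t2 + t3 + 2 + 1) ltac:(lia)). lra. }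
 pose proof (H t1 ltac:(lia)). pose proof (H t2 ltac:(lia)). pose proof (H t3 ltac:(lia)). lra. Qed.

Lemma sumR_term_le f m j : (forall i, (i < m)%nat -> 0 <= f i) -> (j < m)%nat -> f j <= sumR f m.
Proof. induction m; intros H Hj; [lia|]. rewrite sumR_S.
 assert (0 <= sumR f m) by (apply sumR_nonneg; intros; apply H; lia).
 destruct (Nat.eq_dec j m) as [->|Hne]; [lra|].
 assert (f j <= sumR f m) by (apply IHm; [intros; apply H; lia|lia]). pose proof (H m ltac:(lia)). lra. Qed.

Lemma super t1 t2 t3 w (E T : nat -> R) c K N0 :
  (t1 + t2 + t3 + 2 <= w)%nat ->
  (forall n, (w < n)%nat -> E n = T n + sumR (fun j => E j * wsum t1 t2 t3 n j) (n - 1)) ->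
  (w < N0)%nat ->
  (forall n, (N0 <= n)%nat -> T n <= c * INR (S n) * Hcal t1 t2 t3) ->
  (forall j, (j < N0)%nat -> E j <= c * (INR (S j) * harm (S j)) + K * INR (S j)) ->
  forall n, E n <= c * (INR (S n) * harm (S n)) + K * INR (S n).
Proof. intros Hw Hrec HN0 HT Hbase n. induction n as [n IH] using Wf_nat.lt_wf_ind.
 destruct (Nat.lt_ge_cases n N0) as [Hn|Hn]; [auto|].
 destruct n as [|[|m]]; try lia.
 rewrite Hrec by lia.
 assert (Hle : sumR (fun j => E j * wsum t1 t2 t3 (S (S m)) j) (S (S m) - 1) <=
   sumR (fun j => c * ((INR (S j) * harm (S j)) * wsum t1 t2 t3 (S (S m)) j) + K * (INR (S j) * wsum t1 t2 t3 (S (S m)) j)) (S (S m) - 1)).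
 { apply sumR_le; intros j Hj. pose proof (wsum_nonneg t1 t2 t3 (S (S m)) j).
   pose proof (IH j ltac:(lia)). nra. }
 rewrite sumR_plus, !sumR_scal, KS2, KS1 in Hle by lia.
 pose proof (HT _ Hn). nra. Qed.


Lemma upper_bound t1 t2 t3 w (E T : nat -> R) c N0 :
  (t1 + t2 + t3 + 2 <= w)%nat ->
  (forall n, (w < n)%nat -> E n = T n + sumR (fun j => E j * wsum t1 t2 t3 n j) (n - 1)) ->
  (w < N0)%nat ->
  (forall n, (N0 <= n)%nat -> T n <= c * INR (S n) * Hcal t1 t2 t3) ->
  exists K, forall n, E n <= c * (INR (S n) * harm (S n)) + K * INR (S n).
Proof. intros Hw Hrec HN0 HT.
 set (K := sumR (fun j => Rabs (E j - c * (INR (S j) * harm (S j)))) N0).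
 exists K. apply (super t1 t2 t3 w E T c K N0); auto.
 intros j Hj.
 assert (HK : Rabs (E j - c * (INR (S j) * harm (S j))) <= K).
 { apply (sumR_term_le (fun j => Rabs (E j - c * (INR (S j) * harm (S j))))); auto.
   intros; apply Rabs_pos. }
 assert (0 <= K) by (pose proof (Rabs_pos (E j - c * (INR (S j) * harm (S j)))); lra).
 assert (1 <= INR (S j)) by (apply (le_INR 1); lia).
 pose proof (Rle_abs (E j - c * (INR (S j) * harm (S j)))). nra. Qed.

Theorem theorem6p2 (t1 t2 t3 w : nat) (E T : nat -> R) (a eps : R) :
  (t1 + t2 + t3 + 2 <= w)%nat ->
  (forall n : nat, (w < n)%nat ->
     E n = T n + sumR (fun j => E j *
             (probJr t1 t2 t3 n 1 j + probJr t1 t2 t3 n 2 j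
              + probJr t1 t2 t3 n 3 j)) (n - 1)) ->
  0 < eps ->
  (exists (C : R) (N : nat), forall n : nat, (N <= n)%nat ->
     Rabs (T n - a * INR n) <= C * Rpower (INR n) (1 - eps)) ->
  is_lim_seq (fun n : nat => E n / (INR n * ln (INR n))) (a / Hcal t1 t2 t3).
Proof. intros Hw Hrec Heps Hb.
 assert (Hrec' : forall n, (w < n)%nat -> E n = T n + sumR (fun j => E j * wsum t1 t2 t3 n j) (n - 1))
   by exact Hrec.
 pose proof (Hcal_pos t1 t2 t3) as HcP. set (Hc := Hcal t1 t2 t3) in *.
 apply is_lim_seq_spec. intros ep. pose proof (cond_pos ep) as Hep.
 set (eta := ep * Hc / 4).
 assert (Heta : 0 < eta) by (unfold eta; apply Rmult_lt_0_compat; [apply Rmult_lt_0_compat|]; lra).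
 destruct (small_o T a eps Heps Hb (eta / 2) ltac:(lra)) as [NT HNT].
 destruct (proj2 (is_lim_seq_spec _ _) is_lim_seq_INR ((Rabs a + eta) / (eta / 2))) as [Na HNa].
 set (N0 := S (max w (max NT Na))).
 assert (Hres : forall n, (N0 <= n)%nat -> Rabs (T n - a * INR n) <= eta / 2 * INR n /\ Rabs a + eta <= eta / 2 * INR n).
 { intros n Hn. split; [apply HNT; lia|].
   specialize (HNa n ltac:(lia)). apply (Rmult_lt_compat_l (eta/2)) in HNa; [|lra].
   replace (eta / 2 * ((Rabs a + eta) / (eta / 2))) with (Rabs a + eta) in HNa by (field; lra). lra. }
 destruct (upper_bound t1 t2 t3 w E T ((a + eta) / Hc) N0 Hw Hrec' ltac:(unfold N0; lia)) as [K HK].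
 { intros n Hn. destruct (Hres n Hn) as [R1 R2]. change (Hcal t1 t2 t3) with Hc.
   replace ((a + eta) / Hc * INR (S n) * Hc) with ((a + eta) * (INR n + 1)) by (rewrite S_INR; field; lra).
   pose proof (Rle_abs (T n - a * INR n)). pose proof (Rle_abs a). pose proof (Rle_abs (-a)).
   rewrite Rabs_Ropp in *. lra. }
 destruct (upper_bound t1 t2 t3 w (fun n => - E n) (fun n => - T n) (- ((a - eta) / Hc)) N0 Hw)
   as [K' HK'].
 { intros n Hn. cbv beta. rewrite (Hrec' n Hn).
   rewrite (sumR_ext (fun j => - E j * wsum t1 t2 t3 n j) (fun j => -1 * (E j * wsum t1 t2 t3 n j))) by (intros; ring).
   rewrite sumR_scal. ring. }
 { unfold N0; lia. }
 { intros n Hn. destruct (Hres n Hn) as [R1 R2]. change (Hcal t1 t2 t3) with Hc.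
   replace (- ((a - eta) / Hc) * INR (S n) * Hc) with (- ((a - eta) * (INR n + 1))) by (rewrite S_INR; field; lra).
   pose proof (Rle_abs (-(T n - a * INR n))). rewrite Rabs_Ropp in *.
   pose proof (Rle_abs a). nra. }
 cbv beta in HK'.
 set (G := fun n => INR (S n) * harm (S n) / (INR n * ln (INR n))).
 set (Sn := fun n => INR (S n) / (INR n * ln (INR n))).
 assert (LU : is_lim_seq (fun n => (a + eta) / Hc * G n + K * Sn n) ((a + eta) / Hc * 1 + K * 0)).
 { apply is_lim_seq_plus'; [exact (is_lim_seq_scal_l G _ 1 lim_G)|exact (is_lim_seq_scal_l Sn _ 0 lim_S)]. }
 assert (LL : is_lim_seq (fun n => (a - eta) / Hc * G n + (- K') * Sn n) ((a - eta) / Hc * 1 + (- K') * 0)).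
 { apply is_lim_seq_plus'; [exact (is_lim_seq_scal_l G _ 1 lim_G)|exact (is_lim_seq_scal_l Sn _ 0 lim_S)]. }
 assert (Hq : 0 < ep / 4) by lra.
 destruct (proj2 (is_lim_seq_spec _ _) LU (mkposreal _ Hq)) as [N1 HN1].
 destruct (proj2 (is_lim_seq_spec _ _) LL (mkposreal _ Hq)) as [N2 HN2].
 exists (max 2 (max N1 N2)). intros n Hn.
 specialize (HN1 n ltac:(lia)). specialize (HN2 n ltac:(lia)). simpl in HN1, HN2.
 pose proof (ln_pos_n n ltac:(lia)) as Hl. assert (0 < INR n) by (apply lt_0_INR; lia).
 assert (Hd : 0 < INR n * ln (INR n)) by (apply Rmult_lt_0_compat; lra).
 specialize (HK n). specialize (HK' n).
 assert (U : E n / (INR n * ln (INR n)) <= (a + eta) / Hc * G n + K * Sn n).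
 { unfold G, Sn.
   apply (Rle_trans _ (((a + eta) / Hc * (INR (S n) * harm (S n)) + K * INR (S n)) / (INR n * ln (INR n)))).
   - unfold Rdiv. apply Rmult_le_compat_r; [left; apply Rinv_0_lt_compat; auto|auto].
   - right. field. lra. }
 assert (L : (a - eta) / Hc * G n + (- K') * Sn n <= E n / (INR n * ln (INR n))).
 { unfold G, Sn.
   apply (Rle_trans _ (((a - eta) / Hc * (INR (S n) * harm (S n)) - K' * INR (S n)) / (INR n * ln (INR n)))).
   - right. field. lra.
   - unfold Rdiv. apply Rmult_le_compat_r; [left; apply Rinv_0_lt_compat; auto|].
     replace (- ((a - eta) / Hc)) with (- 1 * ((a - eta) / Hc)) in HK' by ring. lra. }
 assert (Ee : eta / Hc = ep / 4) by (unfold eta; field; lra).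
 assert (Ep : (a + eta) / Hc = a / Hc + ep / 4) by (rewrite <- Ee; field; lra).
 assert (Em : (a - eta) / Hc = a / Hc - ep / 4) by (rewrite <- Ee; field; lra).
 rewrite Ep in HN1, U. rewrite Em in HN2, L.
 apply Rabs_def1; apply Rabs_def2 in HN1; apply Rabs_def2 in HN2; lra. Qed.
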